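(* Let $K\subset\mathbb{R}^n$ be a nonempty convex set and $c>0$ fixed. Then the function $\varepsilon\mapsto M^{\operatorname{loc}}(\varepsilon)$ on $(0,\infty)$ is monotone non-increasing.
   Context: $B(\theta,r)$ is the closed Euclidean ball. $M(\delta,S)$ is the largest cardinality of a $\delta$-packing of $S$ (distinct points at Euclidean distance $\ge\delta$); $M^{\operatorname{loc}}(\varepsilon)=\sup_{\theta\in K}M(\varepsilon/c,B(\theta,\varepsilon)\cap K)$. *)

(* Defs.v *)
From HB Require Import structures.
From mathcomp Require Import all_boot all_order all_algebra.
From mathcomp Require Import all_classical all_reals ereal.
Set Implicit Arguments. Unset Strict Implicit. Unset Printing Implicit Defensive.
Import Order.TTheory GRing.Theory Num.Theory.
Local Open Scope classical_set_scope.
Local Open Scope ring_scope.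

Definition edist (R : realType) (n : nat) (x y : 'rV[R]_n) : R :=
  Num.sqrt (\sum_(i < n) (x ord0 i - y ord0 i) ^+ 2).

Definition eball (R : realType) (n : nat) (theta : 'rV[R]_n) (r : R)
  : set 'rV[R]_n := [set y | edist theta y <= r].

Definition convex_set (R : realType) (n : nat) (K : set 'rV[R]_n) : Prop :=
  forall x y (t : R), K x -> K y -> 0 <= t <= 1 ->
    K (t *: x + (1 - t) *: y).

Definition is_packing (R : realType) (n : nat) (delta : R)
  (S : set 'rV[R]_n) (P : seq 'rV[R]_n) : Prop :=
  uniq P /\ (forall x, x \in P -> S x) /\
  (forall x y, x \in P -> y \in P -> x != y -> delta <= edist x y).

(* M(delta, S): largest cardinality of a delta-packing (in \bar R, so that it
   is +oo if packings of arbitrarily large size exist) *)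
Definition packing_number (R : realType) (n : nat) (delta : R)
  (S : set 'rV[R]_n) : \bar R :=
  ereal_sup [set ((size P)%:R)%:E | P in is_packing delta S].

Definition Mloc (R : realType) (n : nat) (K : set 'rV[R]_n) (c eps : R)
  : \bar R :=
  ereal_sup [set packing_number (eps / c) (eball theta eps `&` K) | theta in K].

(* Main.v *)
Require Import Defs.
From HB Require Import structures.
From mathcomp Require Import all_boot all_order all_algebra.
From mathcomp Require Import all_classical all_reals ereal.
From mathcomp Require Import ring lra.
Import Order.TTheory GRing.Theory Num.Theory.
Local Open Scope classical_set_scope.
Local Open Scope ring_scope.

Lemma edist_hom (R : realType) (n : nat) (t : R) (z x y : 'rV[R]_n) :
  0 <= t -> edist (t *: x + (1 - t) *: z) (t *: y + (1 - t) *: z) = t * edist x y.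
Proof.
move=> t0; rewrite /edist.
have e : forall i, (t *: x + (1 - t) *: z) ord0 i - (t *: y + (1 - t) *: z) ord0 i
   = t * (x ord0 i - y ord0 i) by move=> i; rewrite !mxE; ring.
under eq_bigr => i _ do rewrite e exprMn.
rewrite -mulr_sumr sqrtrM ?sqr_ge0 // sqrtr_sqr ger0_norm //.
Qed.

Lemma pack_mono (R : realType) (n : nat) (K : set 'rV[R]_n) (c : R) theta eps1 eps2 :
  convex_set K -> K theta -> 0 < eps1 -> eps1 <= eps2 ->
  (packing_number (eps2 / c) (eball theta eps2 `&` K) <=
   packing_number (eps1 / c) (eball theta eps1 `&` K))%E.
Proof.
move=> cK Kt e1 e12.
have e2 : 0 < eps2 by apply: lt_le_trans e12.
set t := eps1 / eps2.
have t0 : 0 < t by rewrite divr_gt0.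
have t1 : t <= 1 by rewrite ler_pdivrMr // mul1r.
pose f := fun x : 'rV[R]_n => t *: x + (1 - t) *: theta.
have fth : f theta = theta by rewrite /f -scalerDl addrC subrK scale1r.
have finj : injective f.
  by move=> x y /addIr /scalerI; apply; rewrite gt_eqF.
apply: ge_ereal_sup => _ [P [uP [inP dP]] <-].
apply: le_ereal_sup_tmp; exists ((size (map f P))%:R)%:E; last by rewrite size_map.
exists (map f P) => //; split; first by rewrite map_inj_uniq.
split.
  move=> _ /mapP [x xP ->]; have [Bx Kx] := inP x xP; split.
    rewrite /eball /= -{1}fth /f edist_hom; last exact: ltW.
    apply: (@le_trans _ _ (t * eps2)); first by rewrite ler_wpM2l // ltW.
    by rewrite /t divfK ?gt_eqF.
  by apply: cK => //; rewrite ltW //=.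
move=> _ _ /mapP [x xP ->] /mapP [y yP ->] nxy.
have nxy' : x != y by apply: contraNneq nxy => ->.
rewrite /f edist_hom; last exact: ltW.
have := dP x y xP yP nxy'.
rewrite /t => h.
have -> : eps1 / c = eps1 / eps2 * (eps2 / c) by rewrite mulrA divfK ?gt_eqF.
by apply: ler_wpM2l; [exact: ltW | exact: h].
Qed.

Theorem mainTheorem7 (R : realType) (n : nat) (K : set 'rV[R]_n) (c : R) :
  K !=set0 -> convex_set K -> 0 < c ->
  forall eps1 eps2 : R, 0 < eps1 -> eps1 <= eps2 ->
    (Mloc K c eps2 <= Mloc K c eps1)%E.
Proof.
move=> _ cK c0 eps1 eps2 e1 e12.
apply: ge_ereal_sup => _ [th Kth <-].
apply: le_ereal_sup_tmp; eexists; first by exists th.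
exact: pack_mono.
Qed.
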